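(* Let $\pi_\theta$ be a policy with parameters $\theta$, acting for horizon $H$, producing states $s_t$, actions $a_t$ and rewards $r_t$ for $t=1,\dots,H$. Let $\gamma\in(0,1)$ be a discount factor and, for $1\le k\le H$, define the truncated (shortened-rollout) policy gradient estimator $$g_k = \sum_{t=k}^H \nabla_\theta \log \pi_\theta(a_t \mid s_t)\cdot G_t, \qquad G_t = \sum_{t'=t}^H \gamma^{t'-t} r_{t'}.$$ Assume $|r_t| \le R_{\max}$ for all $t$ and $\|\nabla_\theta \log \pi_\theta(a_t \mid s_t)\| \le G_{\max}$ for all $t$. Then, with $C = G_{\max}^2 R_{\max}^2$, $$\mathrm{Var}[g_k] \le \frac{C}{(1-\gamma)^2}\left( (H-k+1) - \frac{\gamma\,(1-\gamma^{H-k+1})}{1-\gamma} \right)^2,$$ and this upper bound decreases monotonically as $k$ increases.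
   Context: $g_k$ corresponds to starting rollouts after a verified prefix of $k-1$ steps, so that the remaining horizon is $H-k+1$. For the vector-valued random variable $g_k$, $\mathrm{Var}[g_k]$ denotes $\mathbb{E}\|g_k-\mathbb{E}g_k\|^2$, and $\|\cdot\|$ is the Euclidean norm. *)

(* Defs.v *)
From HB Require Import structures.
From mathcomp Require Import all_boot all_order all_algebra.
From mathcomp Require Import all_classical all_reals all_analysis.
Set Implicit Arguments. Unset Strict Implicit. Unset Printing Implicit Defensive.
Import Order.TTheory GRing.Theory Num.Theory.
Import numFieldNormedType.Exports.
Local Open Scope ring_scope.

Definition enorm {R : realType} {d : nat} (x : 'rV[R]_d) : R :=
  Num.sqrt (\sum_(i < d) (x 0 i) ^+ 2).

Definition grad {R : realType} {d : nat} (f : 'rV[R]_d -> R) (theta : 'rV[R]_d)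
  : 'rV[R]_d := \row_(i < d) derive f theta (delta_mx 0 i).

Definition score {R : realType} {d : nat} {Om S A : Type}
  (pi : 'rV[R]_d -> S -> A -> R) (theta : 'rV[R]_d)
  (s : nat -> Om -> S) (a : nat -> Om -> A) (t : nat) (w : Om) : 'rV[R]_d :=
  grad (fun th => ln (pi th (s t w) (a t w))) theta.

Definition disc_return {R : realType} {Om : Type} (H : nat) (gamma : R)
  (r : nat -> Om -> R) (t : nat) (w : Om) : R :=
  \sum_(t <= t' < H.+1) gamma ^+ (t' - t) * r t' w.

Definition g_est {R : realType} {d : nat} {Om S A : Type}
  (pi : 'rV[R]_d -> S -> A -> R) (theta : 'rV[R]_d)
  (s : nat -> Om -> S) (a : nat -> Om -> A) (r : nat -> Om -> R)
  (H : nat) (gamma : R) (k : nat) (w : Om) : 'rV[R]_d :=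
  \sum_(k <= t < H.+1) disc_return H gamma r t w *: score pi theta s a t w.

Definition Evec {R : realType} {dd} {Om : measurableType dd} {d : nat}
  (P : probability Om R) (X : Om -> 'rV[R]_d) : 'rV[R]_d :=
  \row_(i < d) fine (expectation P (fun w => X w 0 i)).

Definition Varvec {R : realType} {dd} {Om : measurableType dd} {d : nat}
  (P : probability Om R) (X : Om -> 'rV[R]_d) : \bar R :=
  expectation P (fun w => (enorm (X w - Evec P X)) ^+ 2).

Definition var_bound {R : realType} (Gmax Rmax gamma : R) (H k : nat) : R :=
  let C := Gmax ^+ 2 * Rmax ^+ 2 in
  C / (1 - gamma) ^+ 2 *
  (((H - k).+1)%:R - gamma * (1 - gamma ^+ (H - k).+1) / (1 - gamma)) ^+ 2.

(* Main.v *)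
Require Import Defs.
From HB Require Import structures.
From mathcomp Require Import all_boot all_order all_algebra.
From mathcomp Require Import all_classical all_reals all_analysis.
Import Order.TTheory GRing.Theory Num.Theory.
Import numFieldNormedType.Exports.
Local Open Scope ring_scope.

From mathcomp Require Import ring lra zify measurable_realfun.
Section CS.
Variable R : rcfType.
Lemma cauchy_schwarz (n : nat) (a b : 'I_n -> R) :
  (\sum_i a i * b i) ^+ 2 <= (\sum_i a i ^+ 2) * (\sum_i b i ^+ 2).
Proof.
have H0 : 0 <= \sum_i \sum_j (a i * b j - a j * b i) ^+ 2.
  by apply: sumr_ge0 => i _; apply: sumr_ge0 => j _; exact: sqr_ge0.
have E : \sum_i \sum_j (a i * b j - a j * b i) ^+ 2 =
   \sum_i \sum_j (a i ^+ 2 * b j ^+ 2) + \sum_i \sum_j (b i ^+ 2 * a j ^+ 2)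
   - 2 * \sum_i \sum_j ((a i * b i) * (a j * b j)).
  rewrite mulr_sumr -big_split -sumrB /=; apply: eq_bigr => i _.
  rewrite mulr_sumr -big_split -sumrB /=; apply: eq_bigr => j _.
  ring.
rewrite E -!big_distrlr /= -expr2 in H0.
rewrite [X in _ + X - _]mulrC in H0.
lra.
Qed.
End CS.

Section Enorm.
Variable R : realType.
Variable d : nat.
Implicit Types u v : 'rV[R]_d.

Lemma enorm_ge0 v : 0 <= enorm v.
Proof. exact: sqrtr_ge0. Qed.

Lemma enorm_sq v : enorm v ^+ 2 = \sum_i v 0 i ^+ 2.
Proof. by rewrite /enorm sqr_sqrtr //; apply: sumr_ge0 => i _; exact: sqr_ge0. Qed.

Lemma enormD u v : enorm (u + v) <= enorm u + enorm v.
Proof.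
set A := \sum_i u 0 i ^+ 2. set B := \sum_i v 0 i ^+ 2.
set C := \sum_i u 0 i * v 0 i.
have A0 : 0 <= A by apply: sumr_ge0 => i _; exact: sqr_ge0.
have B0 : 0 <= B by apply: sumr_ge0 => i _; exact: sqr_ge0.
have ES : \sum_i (u + v) 0 i ^+ 2 = A + B + 2 * C.
  rewrite /A /B /C mulr_sumr -!big_split /=; apply: eq_bigr => i _.
  rewrite mxE; ring.
have CS : C <= Num.sqrt A * Num.sqrt B.
  rewrite -sqrtrM // (le_trans (real_ler_norm _)) ?num_real //.
  rewrite -sqrtr_sqr ler_wsqrtr //.
  by rewrite /A /B /C; exact: cauchy_schwarz.
rewrite /enorm -/A -/B ES.
rewrite -[X in _ <= X]ger0_norm ?addr_ge0 ?sqrtr_ge0 //.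
rewrite -sqrtr_sqr ler_wsqrtr //.
have := sqr_sqrtr A0; have := sqr_sqrtr B0.
have := sqrtr_ge0 A; have := sqrtr_ge0 B.
nra.
Qed.

Lemma enormZ (a : R) v : enorm (a *: v) = `|a| * enorm v.
Proof.
rewrite /enorm -sqrtr_sqr -sqrtrM ?sqr_ge0 // mulr_sumr.
by congr Num.sqrt; apply: eq_bigr => i _; rewrite mxE exprMn.
Qed.

Lemma enorm0 : enorm (0 : 'rV[R]_d) = 0.
Proof.
rewrite /enorm (eq_bigr (fun _ => 0)) ?big1 ?sqrtr0 // => i _.
by rewrite mxE expr0n.
Qed.

Lemma enorm_sum (s : seq nat) (F : nat -> 'rV[R]_d) :
  enorm (\sum_(t <- s) F t) <= \sum_(t <- s) enorm (F t).
Proof.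
elim: s => [|x s IH]; first by rewrite !big_nil enorm0.
rewrite !big_cons (le_trans (enormD _ _)) // lerD2l //.
Qed.

Lemma enorm_coord v (i : 'I_d) : `|v 0 i| <= enorm v.
Proof.
rewrite -sqrtr_sqr ler_wsqrtr //.
rewrite (bigD1 i) //= lerDl; apply: sumr_ge0 => j _; exact: sqr_ge0.
Qed.
End Enorm.
Arguments enorm_ge0 {R d}.
Arguments enorm_sq {R d}.
Arguments enormD {R d}.
Arguments enormZ {R d}.
Arguments enorm_sum {R d}.
Arguments enorm_coord {R d}.

Section Alg.
Variable R : realType.
Definition qs (g : R) m := \sum_(j < m) g ^+ j.
Definition Ts (g : R) n := \sum_(i < n) qs g i.+1.

Lemma qs_closed g m : g != 1 -> qs g m = (1 - g ^+ m) / (1 - g).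
Proof.
move=> g1; have h : 1 - g != 0 by rewrite subr_eq0 eq_sym.
elim: m => [|m IH]; first by rewrite /qs big_ord0 expr0 subrr mul0r.
rewrite /qs big_ord_recr /= -/(qs g m) IH exprS. by field.
Qed.

Lemma Ts_closed g n : g != 1 ->
  Ts g n = (n%:R - g * (1 - g ^+ n) / (1 - g)) / (1 - g).
Proof.
move=> g1; have h : 1 - g != 0 by rewrite subr_eq0 eq_sym.
elim: n => [|n IH]; first by rewrite /Ts big_ord0 expr0 subrr mulr0 mul0r subrr mul0r.
rewrite /Ts big_ord_recr /= -/(Ts g n) IH qs_closed // exprS -natr1.
by field.
Qed.

Lemma var_bound_eq Gm Rm g H k : g != 1 ->
  var_bound Gm Rm g H k = (Gm * Rm * Ts g (H - k).+1) ^+ 2.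
Proof.
move=> g1; have h : 1 - g != 0 by rewrite subr_eq0 eq_sym.
rewrite /var_bound Ts_closed //. by field.
Qed.

Lemma qs_ge0 g m : 0 <= g -> 0 <= qs g m.
Proof. by move=> g0; apply: sumr_ge0 => i _; exact: exprn_ge0. Qed.

Lemma Ts_ge0 g n : 0 <= g -> 0 <= Ts g n.
Proof. by move=> g0; apply: sumr_ge0 => i _; exact: qs_ge0. Qed.

Lemma Ts_mono g n1 n2 : 0 <= g -> (n1 <= n2)%N -> Ts g n1 <= Ts g n2.
Proof.
move=> g0 le12; rewrite -(subnKC le12).
elim: (n2 - n1)%N => [|m IH]; first by rewrite addn0.
rewrite addnS (le_trans IH) // /Ts big_ord_recr /= lerDl qs_ge0 //.
Qed.

Lemma inner_eq g H t : (t <= H.+1)%N ->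
  \sum_(t <= t' < H.+1) g ^+ (t' - t) = qs g (H.+1 - t).
Proof.
move=> tH; rewrite -{1}[t]add0n big_addn big_mkord /qs.
by apply: eq_bigr => i _; rewrite addnK.
Qed.

Lemma outer_eq g H k : (k <= H)%N ->
  \sum_(k <= t < H.+1) \sum_(t <= t' < H.+1) g ^+ (t' - t) = Ts g (H - k).+1.
Proof.
move=> kH.
rewrite (eq_big_nat _ _ (F2 := fun t => qs g (H.+1 - t))); last first.
  by move=> t /andP[_ tH]; rewrite inner_eq // ltnW.
rewrite -{1}[k]add0n big_addn big_nat_rev big_mkord /Ts subSn //.
apply: eq_bigr => i _; congr qs.
have := ltn_ord i; lia.
Qed.
End Alg.
Arguments qs {R}.
Arguments Ts {R}.

Section Meas.
Variables (R : realType) (dd : measure_display) (Om : measurableType dd).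
Variable P : probability Om R.

Lemma meas_sum_seq (I : eqType) (s : seq I) (h : I -> Om -> R) :
  (forall i, i \in s -> measurable_fun setT (h i)) ->
  measurable_fun setT (fun x => \sum_(i <- s) h i x).
Proof.
elim: s => [|a s IH] hm.
  by under eq_fun do rewrite big_nil; exact: measurable_cst.
under eq_fun do rewrite big_cons.
apply: measurable_realfun.measurable_funD; first by apply: hm; rewrite mem_head.
by apply: IH => i iS; apply: hm; rewrite inE iS orbT.
Qed.

Lemma bnd_Lfun1 (h : Om -> R) (c : R) :
  measurable_fun setT h -> (forall w, `|h w| <= c) -> h \in Lfun P 1.
Proof.
move=> mh hb; apply/Lfun1_integrable.
apply: (@le_integrable _ _ _ P setT measurableT _ (EFin \o cst c)).
- exact/measurable_EFinP.
- move=> x _ /=; rewrite lee_fin (le_trans (hb x)) //.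
  exact: ler_norm.
- exact: finite_measure_integrable_cst.
Qed.

Lemma var_le_sq (f : Om -> R) (c : R) :
  measurable_fun setT f -> (forall w, `|f w| <= c) ->
  (\int[P]_w ((f w - fine (expectation P f)) ^+ 2)%:E <=
   \int[P]_w (f w ^+ 2)%:E)%E.
Proof.
move=> mf fb.
have f1 : f \in Lfun P 1 := bnd_Lfun1 _ _ mf fb.
have ff1 : (f * f)%R \in Lfun P 1.
  apply: (bnd_Lfun1 _ (c * c)); first exact: measurable_realfun.measurable_funM.
  move=> w /=; rewrite normrM; apply: ler_pM => //.
have E1 : (\int[P]_w ((f w - fine (expectation P f)) ^+ 2)%:E)%E = covariance P f f.
  rewrite covariance.unlock expectation.unlock.
  by apply: eq_integral => w _ /=; rewrite expr2.
have E2 : (\int[P]_w (f w ^+ 2)%:E)%E = expectation P (f * f)%R.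
  rewrite expectation.unlock.
  by apply: eq_integral => w _ /=; rewrite expr2.
rewrite E1 E2 covarianceE //.
have /fineK <- := expectation_fin_num f1.
have /fineK <- := expectation_fin_num ff1.
rewrite -EFinM -EFinB lee_fin.
set m := fine _; set v := fine _.
have := sqr_ge0 v; rewrite expr2; lra.
Qed.
End Meas.
Arguments meas_sum_seq {R dd Om I s h}.
Arguments var_le_sq {R dd Om} P {f c}.

Theorem theorem3 (R : realType) (dd : measure_display) (Om : measurableType dd)
  (P : probability Om R) (d : nat) (S A : Type)
  (pi : 'rV[R]_d -> S -> A -> R) (theta : 'rV[R]_d)
  (s : nat -> Om -> S) (a : nat -> Om -> A) (r : nat -> Om -> R)
  (H : nat) (gamma Gmax Rmax : R) :
  0 < gamma < 1 ->
  (forall t, (1 <= t <= H)%N -> measurable_fun setT (r t)) ->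
  (forall t (i : 'I_d), (1 <= t <= H)%N ->
     measurable_fun setT (fun w => score pi theta s a t w 0 i)) ->
  (forall t w, (1 <= t <= H)%N -> `|r t w| <= Rmax) ->
  (forall t w, (1 <= t <= H)%N -> enorm (score pi theta s a t w) <= Gmax) ->
  (forall k, (1 <= k <= H)%N ->
     (Varvec P (g_est pi theta s a r H gamma k) <=
        (var_bound Gmax Rmax gamma H k)%:E)%E)
  /\
  (forall k1 k2, (1 <= k1)%N -> (k1 <= k2)%N -> (k2 <= H)%N ->
     var_bound Gmax Rmax gamma H k2 <= var_bound Gmax Rmax gamma H k1).
Proof.
move=> /andP[g0 g1] mr ms br bs.
have gne1 : gamma != 1 by rewrite lt_eqF.
have g0' : 0 <= gamma by exact: ltW.
split; last first.
  move=> k1 k2 _ k12 _; rewrite !var_bound_eq //.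
  have T0 := @Ts_ge0 _ gamma (H - k2).+1 g0'.
  have T12 : Ts gamma (H - k2).+1 <= Ts gamma (H - k1).+1.
    by apply: Ts_mono => //; rewrite ltnS leq_sub2l.
  rewrite !exprMn; apply: ler_wpM2l; first by rewrite mulr_ge0 ?sqr_ge0.
  by rewrite !expr2; apply: ler_pM.
move=> k /andP[k1 kH].
set X := g_est pi theta s a r H gamma k.
set B := Gmax * Rmax * Ts gamma (H - k).+1.
have Xb : forall w, enorm (X w) <= B.
  move=> w; rewrite /X /g_est.
  apply: (le_trans (enorm_sum _ _)).
  have -> : B = \sum_(k <= t < H.+1)
      (\sum_(t <= t' < H.+1) gamma ^+ (t' - t) * Rmax) * Gmax.
    rewrite /B -outer_eq // mulr_sumr; apply: eq_bigr => t _.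
    rewrite mulr_sumr mulr_suml; apply: eq_bigr => t' _; ring.
  apply: ler_sum_nat => t /andP[kt tH].
  rewrite enormZ; apply: ler_pM.
  - exact: normr_ge0.
  - exact: enorm_ge0.
  - rewrite /disc_return (le_trans (ler_norm_sum _ _ _)) //.
    apply: ler_sum_nat => t' /andP[tt' t'H].
    rewrite normrM ger0_norm ?exprn_ge0 // ler_wpM2l ?exprn_ge0 //.
    apply: br; apply/andP; split; [exact: leq_trans k1 (leq_trans kt tt') | by []].
  - apply: bs; apply/andP; split; [exact: leq_trans k1 kt | by []].
have fb : forall (i : 'I_d) w, `|X w 0 i| <= B.
  by move=> i w; exact: le_trans (enorm_coord _ i) (Xb w).
have mf : forall i : 'I_d, measurable_fun setT (fun w => X w 0 i).
  move=> i.
  have -> : (fun w => X w 0 i) = fun w => \sum_(k <= t < H.+1)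
      disc_return H gamma r t w * score pi theta s a t w 0 i.
    by apply/funext => w; rewrite /X /g_est summxE; apply: eq_bigr => t _; rewrite mxE.
  apply: meas_sum_seq => t; rewrite mem_index_iota => /andP[kt tH].
  apply: measurable_funM; last first.
    by apply: ms; apply/andP; split; [exact: leq_trans k1 kt | by []].
  rewrite /disc_return; apply: meas_sum_seq => t'; rewrite mem_index_iota => /andP[tt' t'H].
  apply: measurable_funM; first exact: measurable_cst.
  by apply: mr; apply/andP; split; [exact: leq_trans k1 (leq_trans kt tt') | by []].
rewrite /Varvec expectation.unlock var_bound_eq // -/B.
have E : forall w, (enorm (X w - Evec P X) ^+ 2)%:E =
    \sum_(i < d) ((X w 0 i - fine (expectation P (fun w => X w 0 i))) ^+ 2)%:E.
  move=> w; rewrite enorm_sq sumEFin; congr EFin; apply: eq_bigr => i _.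
  by rewrite !mxE.
under eq_integral => w _ do rewrite E.
rewrite ge0_integral_sum //; last 2 first.
- move=> i; apply/measurable_EFinP; apply: measurable_funX.
  by apply: measurable_funB => //; exact: measurable_cst.
- by move=> i w _; rewrite lee_fin sqr_ge0.
apply: (@le_trans _ _ (\sum_(i < d) \int[P]_w ((X w 0 i) ^+ 2)%:E)%E).
  by apply: lee_sum => i _; exact: (var_le_sq P (mf i) (fb i)).
rewrite -ge0_integral_sum //; last 2 first.
- by move=> i; apply/measurable_EFinP; apply: measurable_funX.
- by move=> i w _; rewrite lee_fin sqr_ge0.
under eq_integral => w _ do rewrite sumEFin.
apply: le_trans.
  apply: (@ge0_le_integral _ _ _ P setT measurableT _ (fun _ => (B ^+ 2)%:E)).
  - by move=> w _; rewrite lee_fin sumr_ge0 // => i _; exact: sqr_ge0.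
  - apply/measurable_EFinP; apply: meas_sum_seq => i _.
    exact: measurable_funX.
  - exact: measurable_cst.
  - move=> w _; rewrite lee_fin -enorm_sq.
    by rewrite !expr2; apply: ler_pM; rewrite ?enorm_ge0 ?Xb.
rewrite integral_cst //. match goal with |- context [(_ * ?z)%E] => have -> : z = 1%E by exact: probability_setT end. by rewrite mule1.
Qed.
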